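(* Let $m\geq 5$ be a square-free integer with $m\equiv 1\pmod 4$, and let $K=\mathbb{Q}(\sqrt m)$. Then: if $\lfloor\sqrt m\rfloor$ is an even integer greater than $2$, then $U_K=\{1\}\subset\mathcal{F}_K=\{1,\ \tfrac{-3+\lfloor\sqrt m\rfloor+\sqrt m}{2},\ 1+\min T_K\}$ with $\tfrac{-3+\lfloor\sqrt m\rfloor+\sqrt m}{2}=\min T_K$; if $m=5$, then $U_K=\mathcal{F}_K=\{\tfrac{-1+\sqrt5}{2}=2\cos(2\pi/5),\ 1,\ \tfrac{1+\sqrt5}{2}=2\cos(2\pi/10)\}$; if $\lfloor\sqrt m\rfloor$ is odd, then $U_K=\{1\}\subset\mathcal{F}_K=\{1,\ \tfrac{-2+\lfloor\sqrt m\rfloor+\sqrt m}{2},\ 1+\min T_K\}$ with $\tfrac{-2+\lfloor\sqrt m\rfloor+\sqrt m}{2}=\min T_K$.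
   Context: For a real number field $K$, $\wp_K$ is the set of Pisot numbers $\theta\in K$ (real algebraic integers $>1$ whose other conjugates have modulus $<1$) with $\mathbb{Q}(\theta)=K$, enumerated $\theta_1<\theta_2<\cdots$; $\mathcal{F}_K:=\{\theta_{n+1}-\theta_n\mid n\in\mathbb{N}\}$. $U_K$ is the set of root of unity trace numbers in $K$, i.e. positive algebraic integers of the form $2\cos(2k\pi/n)$ with $n\geq4$, $1\leq k\leq n-1$, $\gcd(k,n)=1$, lying in $K$. $T_K$ is the set of algebraic integers $\beta\in K$ with $\beta>2$ whose conjugate $\beta'$ (image under the nontrivial embedding of $K$) lies in $(-2,2)$, $\beta'\neq0$. *)

(* Defs.v *)
From HB Require Import structures.
From mathcomp Require Import all_boot all_order all_algebra.
From mathcomp Require Import all_classical all_reals all_analysis.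
Set Implicit Arguments. Unset Strict Implicit. Unset Printing Implicit Defensive.
Import Order.TTheory GRing.Theory Num.Theory.
Local Open Scope classical_set_scope.
Local Open Scope ring_scope.

Section Defs.
Variable R : realType.

Definition squarefree_nat (m : nat) : Prop :=
  forall d : nat, (d * d %| m)%N -> d = 1%N.

Definition alg_int (x : R) : Prop :=
  exists p : {poly int}, p \is monic /\ root (map_poly (intr : int -> R) p) x.

Definition sqm (m : nat) : R := Num.sqrt (m%:R).

Definition inK (m : nat) (x : R) : Prop :=
  exists a b : rat, x = ratr a + ratr b * sqm m.

(* Pisot numbers theta of K with Q(theta) = K.  theta = a + b sqrt m with b <> 0
   (i.e. theta irrational, so Q(theta) = K), and its only other conjugate is
   a - b sqrt m (image under the nontrivial embedding). *)
Definition pisotK (m : nat) : set R :=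
  [set t | alg_int t /\ 1 < t /\
     exists a b : rat, b != 0 /\ t = ratr a + ratr b * sqm m /\
       `|ratr a - ratr b * sqm m| < 1].

Definition FK (m : nat) : set R :=
  [set d | exists t1 t2, pisotK m t1 /\ pisotK m t2 /\ t1 < t2 /\
     (forall t, pisotK m t -> ~ (t1 < t /\ t < t2)) /\ d = t2 - t1].

Definition UK (m : nat) : set R :=
  [set x | 0 < x /\ alg_int x /\ inK m x /\
     exists n k : nat, [/\ (4 <= n)%N, (1 <= k <= n.-1)%N, coprime k n &
        x = 2 * cos (2 * k%:R * pi / n%:R)]].

Definition TK (m : nat) : set R :=
  [set b | alg_int b /\ 2 < b /\
     exists u v : rat, b = ratr u + ratr v * sqm m /\
       let b' := ratr u - ratr v * sqm m in (-2 < b' < 2) /\ b' != 0].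

Definition is_min (S : set R) (x : R) : Prop := S x /\ forall y, S y -> x <= y.

End Defs.

(* Main.v *)
Require Import Defs.
From HB Require Import structures.
From mathcomp Require Import all_boot all_order all_algebra.
From mathcomp Require Import all_classical all_reals all_analysis.
From mathcomp Require Import ring lra zify.
Import Order.TTheory GRing.Theory Num.Theory.
Local Open Scope classical_set_scope.
Local Open Scope ring_scope.
Lemma quad_poly (R0 : nzRingType) (c1 c0 : R0) : let p := 'X^2 + c1%:P * 'X + c0%:P in
  [/\ size p = 3%N, lead_coef p = 1, p`_0 = c0 & p`_1 = c1].
Proof.
move=> p.
have hs : size p = 3%N.
  rewrite /p -addrA size_addl ?size_polyXn //.
  rewrite (leq_ltn_trans (size_polyD _ _)) // gtn_max.
  rewrite (leq_ltn_trans (size_polyMleq _ _)) ?size_polyX //=.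
    by apply: (leq_ltn_trans (size_polyC_leq1 _)).
  have := size_polyC_leq1 c1; case: (size c1%:P) => [|[|k]] //=.
split => //.
- by rewrite lead_coefE hs /p !coefD coefXn coefC coefCM coefX /= mulr0 !addr0.
- by rewrite /p !coefD coefXn coefC coefCM coefX /= mulr0 !add0r.
- by rewrite /p !coefD coefXn coefC coefCM coefX /= mulr1 add0r addr0.
Qed.

Lemma coef_int_of_div (p0 : {poly rat}) (q : {poly int}) : lead_coef p0 = 1 ->
  q \is monic -> p0 %| map_poly intr q -> forall i, exists z : int, p0`_i = z%:~R.
Proof.
move=> hl /monicP hq /dvdpP_rat_int [p1 [c c0 hp] [r hr]].
have hl1 : lead_coef p1 * lead_coef r = 1 by rewrite -lead_coefM -hr.
have habs : `|lead_coef p1|%N = 1%N.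
  have := congr1 absz hl1; rewrite abszM /= => /eqP; rewrite muln_eq1.
  by case/andP => /eqP.
have hsq : lead_coef p1 * lead_coef p1 = 1.
  move: habs; case: (lead_coef p1) => [n|[|n]] //= h; by rewrite h.
have hc : c = (lead_coef p1)%:~R.
  move: hl; rewrite hp lead_coefZ lead_coef_map_inj //=; last exact: intr_inj.
  move=> h1.
  have -> : c = c * ((lead_coef p1)%:~R * (lead_coef p1)%:~R) by rewrite -rmorphM /= hsq mulr1.
  by rewrite mulrA h1 mul1r.
move=> i; exists (lead_coef p1 * p1`_i).
by rewrite hp coefZ coef_map /= hc rmorphM.
Qed.

Lemma div_of_root (R : realType) (p0 : {poly rat}) (q : {poly int}) (t : R) : p0 != 0 ->
  root (map_poly (intr : int -> R) q) t -> (map_poly ratr p0).[t] = 0 ->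
  (forall r : {poly rat}, (size r < size p0)%N -> (map_poly ratr r).[t] = 0 -> r = 0) ->
  p0 %| map_poly intr q.
Proof.
move=> p00 /eqP hq hp0 H.
set Q := map_poly intr q.
have hs := ltn_modpN0 Q p00.
have e : Q %% p0 = Q - Q %/ p0 * p0 by rewrite {2}(divp_eq Q p0) addrC addKr.
apply/modp_eq0P; apply: H => //.
have hQ : map_poly (ratr : rat -> R) Q = map_poly (intr : int -> R) q.
  rewrite /Q -map_poly_comp; apply: eq_map_poly => z /=; exact: ratr_int.
by rewrite e rmorphB rmorphM /= hornerD hornerN hornerM hp0 hQ hq mulr0 subr0.
Qed.
Section P.
Variable R : realType.
Variable m : nat.
Hypothesis m5 : (5 <= m)%N.
Hypothesis msq : squarefree_nat m.
Hypothesis m4 : (m %% 4 = 1)%N.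
Local Notation w := (@sqm R m).

Lemma w_sq : w ^+ 2 = m%:R.
Proof. by rewrite /sqm sqr_sqrtr // ler0n. Qed.

Lemma w_ge0 : 0 <= w.
Proof. exact: sqrtr_ge0. Qed.

Lemma w_gt2 : 2 < w.
Proof.
have h1 := w_sq; have h2 := w_ge0.
have h3 : (5:R) <= m%:R by rewrite (ler_nat R 5 m).
nra.
Qed.

Lemma sqfree_rat (r : rat) (z : int) : r ^+ 2 * m%:R = z%:~R -> exists y : int, r = y%:~R.
Proof.
move=> hr.
have hd : denq r = 1.
  have e1 : ((numq r) ^+ 2 * m%:Z)%:~R = (z * (denq r) ^+ 2)%:~R :> rat.
    rewrite !rmorphM /= numqE -hr /=; ring.
  have e2 : (numq r ^+ 2 * m%:Z = z * denq r ^+ 2)%R by apply: (intr_inj e1).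
  have e3 : (`|numq r| * `|numq r| * m = `|z| * (`|denq r| * `|denq r|))%N.
    by have := congr1 absz e2; rewrite !abszM.
  have e4 : (`|denq r| * `|denq r| %| m)%N.
    have : (`|denq r| * `|denq r| %| `|numq r| * `|numq r| * m)%N by rewrite e3 dvdn_mull.
    rewrite Gauss_dvdr //.
    by rewrite coprimeMl !coprimeMr coprime_sym coprime_num_den.
  have e5 := @msq _ e4.
  have := denq_gt0 r; lia.
exists (numq r); by rewrite numqE hd mulr1.
Qed.

Lemma w_irr (r : rat) : ratr r != w.
Proof.
apply/negP => /eqP hr.
have h2 : r ^+ 2 = m%:R.
  apply: (fmorph_inj (@ratr R)); rewrite rmorphXn /= hr w_sq.
  by rewrite rmorph_nat.
have [y hy] : exists y : int, r = y%:~R.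
  apply: (@sqfree_rat r (m * m)%:Z); rewrite h2.
  have -> : ((m * m)%N%:Z)%:~R = (m * m)%N%:R :> rat by []. by rewrite natrM.
have hy2 : (y * y = m%:Z)%R.
  apply: (@intr_inj rat); by rewrite rmorphM /= -hy -expr2 h2.
have e3 : (`|y| * `|y| = m)%N by have := congr1 absz hy2; rewrite abszM.
have e4 : (`|y| * `|y| %| m)%N by rewrite e3.
have e5 := @msq _ e4.
lia.
Qed.

Lemma lin0 (a b : rat) : ratr a + ratr b * w = 0 -> a = 0 /\ b = 0.
Proof.
move=> h.
have hb : b = 0.
  apply/eqP; apply/negP => /negP hb.
  have := w_irr (- a / b); rewrite rmorphM rmorphN /= fmorphV /=.
  have hb' : (ratr b : R) != 0 by rewrite fmorph_eq0.
  have -> : w = - ratr a / ratr b.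
    have e : ratr b * w = - ratr a :> R by rewrite -[ratr b * w](addKr (ratr a)) h addr0.
    by rewrite -e mulrC mulKf.
  by rewrite eqxx.
split => //; move: h; rewrite hb rmorph0 mul0r addr0 => /eqP.
by rewrite fmorph_eq0 => /eqP.
Qed.

Lemma rep_uniq (a b c d : rat) : ratr a + ratr b * w = ratr c + ratr d * w -> a = c /\ b = d.
Proof.
move=> h.
have := @lin0 (a - c) (b - d).
rewrite !rmorphB /= mulrBl.
have -> : ratr a - ratr c + (ratr b * w - ratr d * w) = (ratr a + ratr b * w) - (ratr c + ratr d * w) :> R by ring.
rewrite h subrr => /(_ erefl) [/eqP h1 /eqP h2].
by split; apply/eqP; rewrite -subr_eq0.
Qed.

Lemma parity (P Qb z0 : int) : P ^+ 2 - Qb ^+ 2 * m%:Z = 4 * z0 -> exists k, P = Qb + 2 * k.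
Proof.
move=> h.
have hm : m = (4 * (m %/ 4) + 1)%N by rewrite {1}(divn_eq m 4) m4 mulnC.
set e := (m %/ 4)%N in hm.
have hm' : m%:Z = 4 * e%:Z + 1 by rewrite hm; lia.
have hd := divz_eq (P - Qb) 2.
have h0 := @modz_ge0 (P - Qb) 2 isT.
have h1 := @ltz_pmod (P - Qb) 2 isT.
set k := ((P - Qb) %/ 2)%Z in hd.
set r := ((P - Qb) %% 2)%Z in hd h0 h1.
have [r0|r1] : r = 0 \/ r = 1 by lia.
- exists k; rewrite r0 in hd; lia.
- exfalso; have hP : P = Qb + 2 * k + 1 by lia.
  rewrite hP hm' in h; lia.
Qed.

Lemma algint_form (a b : rat) : alg_int (ratr a + ratr b * w) ->
  exists K Q : int, a = K%:~R + Q%:~R / 2 /\ b = Q%:~R / 2.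
Proof.
case=> q [qm hq].
set t := ratr a + ratr b * w in hq.
have [b0|b0] := eqVneq b 0.
- pose p0 := 'X - a%:P.
  have hdiv : p0 %| map_poly intr q.
    apply: (@div_of_root R p0 q t) => //.
    + exact: monic_neq0 (monicXsubC a).
    + by rewrite rmorphB /= map_polyX map_polyC /= hornerE /t b0 rmorph0 mul0r addr0 !hornerE subrr.
    + move=> r; rewrite size_XsubC ltnS => /size1_polyC ->.
      rewrite map_polyC hornerC /= => /eqP; rewrite fmorph_eq0 => /eqP ->.
      by [].
  have [z hz] := @coef_int_of_div p0 q (monicP (monicXsubC a)) qm hdiv 0.
  move: hz; rewrite coefB coefX coefC /= sub0r => hz.
  exists (- z), 0; split; last by rewrite b0 mul0r.
  by rewrite mul0r addr0 rmorphN /= -hz opprK.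
- pose c1 := - (2 * a); pose c0 := a ^+ 2 - b ^+ 2 * m%:R.
  have [hs hl h0 h1] := @quad_poly _ c1 c0.
  set p0 := 'X^2 + c1%:P * 'X + c0%:P in hs hl h0 h1.
  have hdiv : p0 %| map_poly intr q.
    apply: (@div_of_root R p0 q t) => //.
    + by rewrite -size_poly_gt0 hs.
    + rewrite !rmorphD /= map_polyXn rmorphM /= map_polyX !map_polyC /= !hornerE.
      rewrite /c1 /c0 !(rmorphN, rmorphM, rmorphXn, rmorphB, rmorphD, rmorph_nat) /= /t -w_sq.
      rewrite rmorph1.
      ring.
    + move=> r; rewrite hs ltnS => hr2 hr.
      have hr' : (size (map_poly (ratr : rat -> R) r) <= 2)%N by rewrite size_map_poly.
      move: hr; rewrite (horner_coef_wide _ hr') !big_ord_recr big_ord0 /= add0r expr0 mulr1 expr1.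
      rewrite !coef_map /= /t => hr.
      have := @lin0 (r`_0 + r`_1 * a) (r`_1 * b).
      rewrite rmorphD !rmorphM /=.
      have -> : ratr r`_0 + ratr r`_1 * ratr a + ratr r`_1 * ratr b * w =
                ratr r`_0 + ratr r`_1 * (ratr a + ratr b * w) :> R by ring.
      move=> /(_ hr) [e0 e1].
      have r1 : r`_1 = 0 by move/eqP: e1; rewrite mulf_eq0 (negbTE b0) orbF => /eqP.
      have r0 : r`_0 = 0 by move: e0; rewrite r1 mul0r addr0.
      apply/polyP => i; rewrite coef0.
      case: i => [|[|i]] //; rewrite nth_default //; exact: (leq_trans hr2).
  have [z0 hz0] := @coef_int_of_div p0 q hl qm hdiv 0.
  have [z1 hz1] := @coef_int_of_div p0 q hl qm hdiv 1.
  rewrite h0 in hz0; rewrite h1 in hz1.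
  have [Qb hQb] : exists Qb : int, 2 * b = Qb%:~R.
    apply: (@sqfree_rat (2 * b) (z1 ^+ 2 - 4 * z0)).
    rewrite !(rmorphB, rmorphM, rmorphXn) /= -hz0 -hz1 /c1 /c0 /=.
    have -> : (4%:~R : rat) = 4 by [].
    ring.
  have hP : 2 * a = (- z1)%:~R by rewrite rmorphN /= -hz1 /c1 opprK.
  have hint : (- z1) ^+ 2 - Qb ^+ 2 * m%:Z = 4 * z0.
    apply: (@intr_inj rat).
    rewrite !(rmorphB, rmorphM, rmorphXn, rmorphN) /=. rewrite -hz1. rewrite -hz0. rewrite -hQb.
    have -> : (4%:~R : rat) = 4 by [].
    have -> : ((m%:Z)%:~R : rat) = m%:R by [].
    rewrite /c1 /c0; ring.
  have [k hk] := @parity _ _ _ hint.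
  exists k, Qb; split.
  + have -> : a = (2 * a) / 2 by field.
    rewrite hP hk rmorphD rmorphM /=.
    have -> : ((2 : int)%:~R : rat) = 2 by [].
    by field.
  + have h2 : (2:rat) != 0 by [].
    apply: (mulfI h2); rewrite hQb; by field.
Qed.

Local Notation om := ((1 + w) / 2).
Local Notation al := ((w - 1) / 2).

Lemma m_4e : exists e : nat, m%:R = 4 * e%:R + 1 :> R.
Proof.
exists (m %/ 4)%N.
have hm : m = (4 * (m %/ 4) + 1)%N by rewrite {1}(divn_eq m 4) m4 mulnC.
by rewrite {1}hm natrD natrM.
Qed.

Lemma algint_KQ (K Q : int) : alg_int (K%:~R + Q%:~R * om).
Proof.
have hm : m = (4 * (m %/ 4) + 1)%N by rewrite {1}(divn_eq m 4) m4 mulnC.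
set e := (m %/ 4)%N in hm.
pose c1 : int := - (2 * K + Q).
pose c0 : int := K ^+ 2 + K * Q - Q ^+ 2 * e%:Z.
have [hs hl h0 h1] := @quad_poly _ c1 c0.
exists ('X^2 + c1%:P * 'X + c0%:P); split; first exact/monicP.
rewrite /root !rmorphD /= map_polyXn rmorphM /= map_polyX !map_polyC /= !hornerE.
rewrite /c1 /c0 !(rmorphN, rmorphM, rmorphXn, rmorphB, rmorphD) /=.
try have -> : ((e%:Z)%:~R : R) = e%:R by [].
try have -> : ((2 : int)%:~R : R) = 2 by [].
have hw : w ^+ 2 = 4 * e%:R + 1 by rewrite w_sq {1}hm natrD natrM.
have e1 : (1%:~R : R) = 1 by [].
rewrite e1.
apply/eqP; transitivity ((Q%:~R ^+ 2 / 4) * (w ^+ 2 - (4 * e%:R + 1)) : R); first by field.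
by rewrite hw subrr mulr0.
Qed.

Lemma ratr_half (K Q : int) : ratr (K%:~R + Q%:~R / 2 : rat) = K%:~R + Q%:~R / 2 :> R.
Proof. by rewrite rmorphD fmorph_div /= !ratr_int rmorph_nat. Qed.

Lemma conj_KQ (K Q : int) : (K%:~R + Q%:~R / 2) - Q%:~R / 2 * w = K%:~R - Q%:~R * al :> R.
Proof. by field. Qed.

Lemma val_KQ (K Q : int) : (K%:~R + Q%:~R / 2) + Q%:~R / 2 * w = K%:~R + Q%:~R * om :> R.
Proof. by field. Qed.

Definition PP (Q K : int) := 0 < Q /\ `|K%:~R - Q%:~R * al| < 1 :> R.

Lemma ratr_halfQ (Q : int) : ratr (Q%:~R / 2 : rat) = Q%:~R / 2 :> R.
Proof. by rewrite fmorph_div /= ratr_int rmorph_nat. Qed.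

Lemma pisot_char t : pisotK m t <-> exists Q K : int, PP Q K /\ t = K%:~R + Q%:~R * om.
Proof.
split.
- case=> halg [ht1 [a [b [b0 [ht hc]]]]].
  rewrite ht in halg; have [K [Q [ha hb]]] := @algint_form _ _ halg.
  rewrite ha hb ratr_half ratr_halfQ conj_KQ in hc.
  rewrite ha hb ratr_half ratr_halfQ val_KQ in ht.
  exists Q, K; split => //; split => //.
  have hw := w_gt2.
  have : Q%:~R * w > 0 :> R.
    move: hc; rewrite ltr_norml => /andP [h1 h2].
    have -> : Q%:~R * w = t - (K%:~R - Q%:~R * al) :> R by rewrite ht; field.
    lra.
  rewrite pmulr_lgt0 ?ltr0z //; lra.
- case=> Q [K [[hQ hc] ht]].
  have hw := w_gt2.
  have hQ1 : 1 <= Q%:~R :> R by rewrite ler1z.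
  split; first by rewrite ht; apply: algint_KQ.
  split.
    have -> : t = Q%:~R * w + (K%:~R - Q%:~R * al) by rewrite ht; field.
    move: hc; rewrite ltr_norml => /andP [h1 h2]; nra.
  exists (K%:~R + Q%:~R / 2), (Q%:~R / 2); split.
    rewrite mulf_neq0 // ?intr_eq0 ?invr_eq0 //; exact: lt0r_neq0.
  by rewrite ratr_half ratr_halfQ conj_KQ val_KQ.
Qed.


Lemma al_nint (Q K : int) : Q != 0 -> K%:~R != Q%:~R * al :> R.
Proof.
move=> hQ; apply/eqP => h.
have hQ' : (Q%:~R : R) != 0 by rewrite intr_eq0.
have := w_irr ((2 * K + Q)%:~R / Q%:~R).
rewrite fmorph_div /= !ratr_int.
have -> : ((2 * K + Q)%:~R / Q%:~R : R) = w.
  rewrite rmorphD rmorphM /= h; by field.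
by rewrite eqxx.
Qed.

Lemma floor_lt (Q : int) : Q != 0 -> (Num.floor (Q%:~R * al))%:~R < Q%:~R * al :> R.
Proof.
move=> hQ; have := floor_le (Q%:~R * al); rewrite le_eqVlt => /orP [/eqP h|//].
by have := @al_nint Q (Num.floor (Q%:~R * al)) hQ; rewrite h eqxx.
Qed.

Lemma floor_gt (Q : int) : Q%:~R * al < (Num.floor (Q%:~R * al))%:~R + 1 :> R.
Proof. by have /andP [_ h] := floor_itv (Q%:~R * al); rewrite rmorphD in h. Qed.

Lemma PP_floor (Q K : int) : 0 < Q ->
  (PP Q K <-> K = Num.floor (Q%:~R * al) \/ K = Num.floor (Q%:~R * al) + 1).
Proof.
move=> hQ.
have hQ0 : Q != 0 by rewrite gt_eqF.
set F := Num.floor (Q%:~R * al).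
have h1 := @floor_lt Q hQ0; have h2 := floor_gt Q.
have h3 := @al_nint Q (F + 1) hQ0.
rewrite -/F in h1 h2.
split.
- case=> _; rewrite ltr_norml => /andP [k1 k2].
  have a1 : (K%:~R : R) < (F + 2)%:~R by rewrite rmorphD /=; lra.
  have a2 : ((F - 1)%:~R : R) < K%:~R by rewrite rmorphB /=; lra.
  rewrite ltr_int in a1; rewrite ltr_int in a2.
  lia.
- case=> ->; split => //; rewrite ltr_norml; apply/andP; split.
  + lra.
  + lra.
  + rewrite rmorphD /=; lra.
  + rewrite rmorphD /=; lra.
Qed.

Lemma T_eq (Q K : int) : K%:~R + Q%:~R * om = Q%:~R * w + (K%:~R - Q%:~R * al) :> R.
Proof. by field. Qed.

Lemma sep (Q1 K1 Q2 K2 : int) : PP Q1 K1 -> PP Q2 K2 -> Q1 < Q2 ->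
  K1%:~R + Q1%:~R * om + (w - 2) < K2%:~R + Q2%:~R * om :> R.
Proof.
move=> [_ h1] [_ h2] hQ.
have hQ' : (Q1 + 1)%:~R <= Q2%:~R :> R by rewrite ler_int; lia.
rewrite rmorphD /= in hQ'.
rewrite !T_eq.
move: h1 h2; rewrite !ltr_norml => /andP [a1 a2] /andP [b1 b2].
have hw := w_gt2.
nra.
Qed.

Lemma floor_diff (f : int) (y : R) : f%:~R < al < f%:~R + 1 ->
  Num.floor (y + al) - Num.floor y = f \/ Num.floor (y + al) - Num.floor y = f + 1.
Proof.
move=> /andP [hf1 hf2].
have /andP [a1 a2] := floor_itv y.
have /andP [b1 b2] := floor_itv (y + al).
rewrite rmorphD /= in a2 b2.
have c1 : ((Num.floor (y + al) - Num.floor y)%:~R : R) < (f + 2)%:~R by rewrite rmorphB rmorphD /=; lra.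
have c2 : ((f - 1)%:~R : R) < (Num.floor (y + al) - Num.floor y)%:~R by rewrite rmorphB rmorphB /=; lra.
rewrite ltr_int in c1; rewrite ltr_int in c2.
lia.
Qed.

Lemma PP_F0 (Q : int) : 0 < Q -> PP Q (Num.floor (Q%:~R * al)).
Proof. by move=> hQ; apply/(@PP_floor Q _ hQ); left. Qed.

Lemma PP_F1 (Q : int) : 0 < Q -> PP Q (Num.floor (Q%:~R * al) + 1).
Proof. by move=> hQ; apply/(@PP_floor Q _ hQ); right. Qed.

Lemma pisot_T (Q K : int) : PP Q K -> pisotK m (K%:~R + Q%:~R * om).
Proof. by move=> h; apply/pisot_char; exists Q, K. Qed.

Lemma same_cluster (Q K1 K2 : int) : PP Q K1 -> PP Q K2 ->
  K1%:~R + Q%:~R * om < K2%:~R + Q%:~R * om :> R -> K2 = K1 + 1.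
Proof.
move=> [_ h1] [_ h2] hlt.
move: h1 h2; rewrite !ltr_norml => /andP [a1 a2] /andP [b1 b2].
have c1 : (K1%:~R : R) < K2%:~R by lra.
have c2 : (K2%:~R : R) < (K1 + 2)%:~R by rewrite rmorphD /=; lra.
rewrite ltr_int in c1; rewrite ltr_int in c2; lia.
Qed.

Arguments sep {Q1 K1 Q2 K2}.
Arguments PP_F0 {Q}.
Arguments PP_F1 {Q}.
Arguments pisot_T {Q K}.
Arguments same_cluster {Q K1 K2}.

Lemma FK_sub (f : int) : f%:~R < al < f%:~R + 1 -> forall d, FK m d ->
  d = 1 \/ d = al + f%:~R \/ d = 1 + (al + f%:~R).
Proof.
move=> hf d [t1 [t2 [p1 [p2 [lt12 [nb ->]]]]]].
have hw := w_gt2.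
move/pisot_char: p1 => [Q1 [K1 [pp1 ht1]]].
move/pisot_char: p2 => [Q2 [K2 [pp2 ht2]]].
subst t1 t2.
case: (ltgtP Q1 Q2) => hQ.
- have hQ1 : 0 < Q1 by case: pp1.
  have [hQ2|hQ2] : Q2 = Q1 + 1 \/ Q1 + 1 < Q2 by lia.
  + subst Q2.
    set F1 := Num.floor (Q1%:~R * al).
    set F2 := Num.floor ((Q1 + 1)%:~R * al).
    have hQ1' : 0 < Q1 + 1 by lia.
    have hlt : Q1 < Q1 + 1 by lia.
    have hK1 : K1 = F1 + 1.
      have [//|hK1] : K1 = F1 + 1 \/ K1 = F1.
        by have := (@PP_floor Q1 K1 hQ1).1 pp1; rewrite -/F1; case=> ->; [right|left].
      exfalso; apply: (nb _ (pisot_T (PP_F1 hQ1))); rewrite -/F1 -hK1; split.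
      * rewrite rmorphD /=; lra.
      * have := sep (PP_F1 hQ1) pp2 hlt; rewrite -/F1 -hK1; lra.
    have hK2 : K2 = F2.
      have [//|hK2] : K2 = F2 \/ K2 = F2 + 1.
        by have := (@PP_floor (Q1 + 1) K2 hQ1').1 pp2; rewrite -/F2; case=> ->; [left|right].
      exfalso; apply: (nb _ (pisot_T (PP_F0 hQ1'))); rewrite -/F2; split.
      * have := sep pp1 (PP_F0 hQ1') hlt; lra.
      * rewrite hK2 rmorphD /=; lra.
    right.
    have e : (Q1 + 1)%:~R * al = Q1%:~R * al + al :> R by rewrite rmorphD /=; ring.
    have hd : F2 - F1 = f \/ F2 - F1 = f + 1 by rewrite /F2 e; exact: floor_diff.
    rewrite hK1 hK2.
    case: hd => hd; [left|right]; have -> : F2 = F1 + f + (F2 - F1 - f) by ring.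
    + by rewrite hd subrr addr0 !rmorphD /=; field.
    + have -> : F2 - F1 - f = 1 by lia.
      by rewrite !rmorphD /=; field.
  + exfalso.
    have hQ3 : 0 < Q1 + 1 by lia.
    apply: (nb _ (pisot_T (PP_F0 hQ3))); split.
    * have hlt : Q1 < Q1 + 1 by lia.
      have := sep pp1 (PP_F0 hQ3) hlt; lra.
    * have := sep (PP_F0 hQ3) pp2 hQ2; lra.
- exfalso; have := sep pp2 pp1 hQ; lra.
- subst Q2; left.
  have := same_cluster pp1 pp2 lt12 => ->.
  rewrite rmorphD /=; ring.
Qed.

Lemma FK_mem (Q1 K1 Q2 K2 : int) : PP Q1 K1 -> PP Q2 K2 ->
  K1%:~R + Q1%:~R * om < K2%:~R + Q2%:~R * om ->
  (forall Q K, PP Q K -> ~ (K1%:~R + Q1%:~R * om < K%:~R + Q%:~R * om /\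
                            K%:~R + Q%:~R * om < K2%:~R + Q2%:~R * om)) ->
  FK m ((K2%:~R + Q2%:~R * om) - (K1%:~R + Q1%:~R * om)).
Proof.
move=> p1 p2 lt H.
exists (K1%:~R + Q1%:~R * om), (K2%:~R + Q2%:~R * om).
split; first exact: pisot_T.
split; first exact: pisot_T.
split => //; split => // t /pisot_char [Q [K [pp ->]]]; exact: H.
Qed.

Lemma FK_one : @FK R m 1.
Proof.
have h1 : (0 : int) < 1 by [].
set F := Num.floor ((1 : int)%:~R * al).
have := @FK_mem 1 F 1 (F + 1) (PP_F0 h1) (PP_F1 h1).
have -> : (F + 1)%:~R + (1 : int)%:~R * om - (F%:~R + (1 : int)%:~R * om) = 1 :> R.
  by rewrite rmorphD /=; ring.
apply.
- rewrite rmorphD /=; lra.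
- move=> Q K pp [lt1 lt2].
  have hQ : 0 < Q by case: pp.
  have [hQe|hQ1] : Q = 1 \/ 1 < Q by lia.
  + subst Q; have := same_cluster (PP_F0 h1) pp lt1; rewrite -/F => hK.
    by move: lt2; rewrite hK ltxx.
  + have := sep (PP_F1 h1) pp hQ1; have := w_gt2; rewrite -/F; lra.
Qed.

Lemma FK_gap (Q0 : int) : 0 < Q0 ->
  @FK R m ((Num.floor ((Q0 + 1)%:~R * al) - Num.floor (Q0%:~R * al))%:~R + al).
Proof.
move=> hQ0.
have hQ1 : 0 < Q0 + 1 by lia.
have hlt : Q0 < Q0 + 1 by lia.
set F1 := Num.floor (Q0%:~R * al).
set F2 := Num.floor ((Q0 + 1)%:~R * al).
have := @FK_mem Q0 (F1 + 1) (Q0 + 1) F2 (PP_F1 hQ0) (PP_F0 hQ1).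
rewrite -/F1 -/F2.
have -> : F2%:~R + (Q0 + 1)%:~R * om - ((F1 + 1)%:~R + Q0%:~R * om) = (F2 - F1)%:~R + al :> R.
  by rewrite !(rmorphD, rmorphB) /=; field.
have hw := w_gt2.
apply.
- have := sep (PP_F1 hQ0) (PP_F0 hQ1) hlt; rewrite -/F1 -/F2; lra.
- move=> Q K pp [lt1 lt2].
  have hQ : 0 < Q by case: pp.
  case: (ltgtP Q Q0) => hQQ.
  + have := sep pp (PP_F1 hQ0) hQQ; rewrite -/F1; lra.
  + have [hQe|hQ2] : Q = Q0 + 1 \/ Q0 + 1 < Q by lia.
    * subst Q; have := same_cluster pp (PP_F0 hQ1) lt2; rewrite -/F2 => hK.
      have := (@PP_floor (Q0 + 1) K hQ1).1 pp; rewrite -/F2; lia.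
    * have := sep (PP_F0 hQ1) pp hQ2; rewrite -/F2; lra.
  + subst Q.
    have := same_cluster (PP_F1 hQ0) pp lt1; rewrite -/F1 => hK.
    have := (@PP_floor Q0 K hQ0).1 pp; rewrite -/F1; lia.
Qed.

Lemma floor1 (f : int) : f%:~R < al < f%:~R + 1 -> Num.floor ((1 : int)%:~R * al) = f.
Proof. move=> /andP [h1 h2]; apply: floor_def; rewrite mul1r rmorphD /= (ltW h1) /=; lra. Qed.

Lemma ex_gap_f (f : int) : f%:~R < al < f%:~R + 1 ->
  exists Q0 : int, 0 < Q0 /\ Num.floor ((Q0 + 1)%:~R * al) - Num.floor (Q0%:~R * al) = f.
Proof.
move=> hf.
case: (pselect (exists Q0 : int, 0 < Q0 /\ Num.floor ((Q0 + 1)%:~R * al) - Num.floor (Q0%:~R * al) = f)) => // hno.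
exfalso.
have step : forall Q0 : int, 0 < Q0 -> Num.floor ((Q0 + 1)%:~R * al) = Num.floor (Q0%:~R * al) + f + 1.
  move=> Q0 hQ0.
  have e : (Q0 + 1)%:~R * al = Q0%:~R * al + al :> R by rewrite rmorphD /=; ring.
  have := @floor_diff f (Q0%:~R * al) hf; rewrite -e; case=> h.
  - by exfalso; apply: hno; exists Q0.
  - lia.
have ind : forall n : nat, Num.floor ((n.+1%:Z)%:~R * al) = f + n%:Z * (f + 1).
  elim=> [|n IH]; first by rewrite (@floor1 f hf) mul0r addr0.
  have -> : (n.+2%:Z) = n.+1%:Z + 1 by lia.
  rewrite step // IH; lia.
move: hf => /andP [hf1 hf2].
have hpos : 0 < f%:~R + 1 - al :> R by lra.
pose n := Num.Def.archi_bound ((f%:~R + 1 - al)^-1).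
have hn : (f%:~R + 1 - al)^-1 < n%:R :> R by apply: archi_boundP; rewrite invr_ge0 ltW.
have hfl := floor_le ((n.+1%:Z)%:~R * al); rewrite ind in hfl.
have : 1 < n%:R * (f%:~R + 1 - al) :> R.
  by rewrite -ltr_pdivrMr // div1r.
move: hfl; rewrite rmorphD rmorphM /= rmorphD /=.
have e1 : ((n.+1%:Z)%:~R : R) = n%:R + 1 by rewrite natr1.
have e2 : ((n%:Z)%:~R : R) = n%:R by [].
have e3 : ((1%:Z)%:~R : R) = 1 by [].
rewrite e1 e2 e3.
nra.
Qed.

Lemma ex_gap_f1 (f : int) : f%:~R < al < f%:~R + 1 ->
  exists Q0 : int, 0 < Q0 /\ Num.floor ((Q0 + 1)%:~R * al) - Num.floor (Q0%:~R * al) = f + 1.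
Proof.
move=> hf.
case: (pselect (exists Q0 : int, 0 < Q0 /\ Num.floor ((Q0 + 1)%:~R * al) - Num.floor (Q0%:~R * al) = f + 1)) => // hno.
exfalso.
have step : forall Q0 : int, 0 < Q0 -> Num.floor ((Q0 + 1)%:~R * al) = Num.floor (Q0%:~R * al) + f.
  move=> Q0 hQ0.
  have e : (Q0 + 1)%:~R * al = Q0%:~R * al + al :> R by rewrite rmorphD /=; ring.
  have := @floor_diff f (Q0%:~R * al) hf; rewrite -e; case=> h.
  - lia.
  - by exfalso; apply: hno; exists Q0.
have ind : forall n : nat, Num.floor ((n.+1%:Z)%:~R * al) = f + n%:Z * f.
  elim=> [|n IH]; first by rewrite (@floor1 f hf) mul0r addr0.
  have -> : (n.+2%:Z) = n.+1%:Z + 1 by lia.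
  rewrite step // IH; lia.
move: hf => /andP [hf1 hf2].
have hpos : 0 < al - f%:~R :> R by lra.
pose n := Num.Def.archi_bound ((al - f%:~R)^-1).
have hn : (al - f%:~R)^-1 < n%:R :> R by apply: archi_boundP; rewrite invr_ge0 ltW.
have hfl := floor_gt (n.+1%:Z); rewrite ind in hfl.
have : 1 < n%:R * (al - f%:~R) :> R.
  by rewrite -ltr_pdivrMr // div1r.
move: hfl; rewrite rmorphD rmorphM /=.
have e1 : ((n.+1%:Z)%:~R : R) = n%:R + 1 by rewrite natr1.
have e2 : ((n%:Z)%:~R : R) = n%:R by [].
rewrite e1 e2.
have hn0 : 0 <= n%:R :> R by rewrite ler0n.
nra.
Qed.

Lemma FK_eq (f : int) : f%:~R < al < f%:~R + 1 ->
  @FK R m = [set 1; al + f%:~R; 1 + (al + f%:~R)].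
Proof.
move=> hf; apply/seteqP; split => d /=.
- by move=> hd; have := @FK_sub f hf d hd; tauto.
- case=> [[->|->]|->].
  + exact: FK_one.
  + have [Q0 [hQ0 e]] := @ex_gap_f f hf.
    by have := @FK_gap Q0 hQ0; rewrite e addrC.
  + have [Q0 [hQ0 e]] := @ex_gap_f1 f hf.
    have := @FK_gap Q0 hQ0; rewrite e.
    rewrite rmorphD /=; congr (FK m _); rewrite (_ : (1%:~R : R) = 1) //; ring.
Qed.

Lemma TK_min (f : int) : f%:~R < al < f%:~R + 1 -> 3 < w -> is_min (@TK R m) (al + f%:~R).
Proof.
move=> /andP [hf1 hf2] hw3.
have hf0 : 0 < f.
  have : (0 : R) < f%:~R by lra.
  by rewrite ltr0z.
have hf1' : 1 <= f%:~R :> R by rewrite ler1z.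
split.
- have ex : al + f%:~R = (f - 1)%:~R + (1 : int)%:~R * om :> R by rewrite rmorphB /=; field.
  split; first by rewrite ex; apply: algint_KQ.
  split; first lra.
  exists ((f - 1)%:~R + (1 : int)%:~R / 2), ((1 : int)%:~R / 2).
  rewrite ratr_half ratr_halfQ val_KQ conj_KQ -ex.
  split => //.
  rewrite rmorphB /=; split.
  + apply/andP; split; lra.
  + rewrite subr_eq0; apply/eqP => h; lra.
- move=> y [halg [hy2 [u [v [hy [hb' hb0]]]]]].
  rewrite hy in halg; have [K [Q [ha hb]]] := @algint_form _ _ halg.
  rewrite ha hb ratr_half ratr_halfQ conj_KQ in hb' hb0.
  rewrite ha hb ratr_half ratr_halfQ val_KQ in hy.
  move: hb' => /andP [c1 c2].
  have hw := w_gt2.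
  have hQ : 0 < Q.
    have : Q%:~R * w > 0 :> R.
      have -> : Q%:~R * w = y - (K%:~R - Q%:~R * al) :> R by rewrite hy; field.
      lra.
    rewrite pmulr_lgt0 ?ltr0z //; lra.
  have [hQe|hQ2] : Q = 1 \/ 1 < Q by lia.
  + subst Q.
    have hK : (f - 2)%:~R < K%:~R :> R by rewrite rmorphB /=; lra.
    rewrite ltr_int in hK.
    have hK' : (f - 1)%:~R <= K%:~R :> R by rewrite ler_int; lia.
    rewrite rmorphB /= in hK'.
    rewrite hy; lra.
  + have hQ2' : 2 <= Q%:~R :> R by rewrite (ler_int R 2 Q).
    have : y = Q%:~R * w + (K%:~R - Q%:~R * al) by rewrite hy; field.
    nra.
Qed.


Fixpoint chp (n : nat) (y : R) : R * R :=
  match n with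
  | 0%N => (2, y)
  | n'.+1 => let p := chp n' y in (p.2, y * p.2 - p.1)
  end.

Lemma chp_cos (th : R) (n : nat) :
  chp n (2 * cos th) = (2 * cos (n%:R * th), 2 * cos (n.+1%:R * th)).
Proof.
elim: n => [|n IH] /=; first by rewrite mul0r cos0 mulr1 mul1r.
rewrite IH /=; congr (_, _).
have e1 : n.+2%:R * th = n.+1%:R * th + th by rewrite -[n.+2]addn1 natrD mulrDl mul1r.
have e2 : n%:R * th = n.+1%:R * th - th by rewrite -[n.+1]addn1 natrD mulrDl mul1r addrK.
have c1 : cos (n.+2%:R * th) = cos (n.+1%:R * th) * cos th - sin (n.+1%:R * th) * sin th by rewrite e1 cosD.
have c2 : cos (n%:R * th) = cos (n.+1%:R * th) * cos th + sin (n.+1%:R * th) * sin th by rewrite e2 cosB.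
rewrite c1 c2; ring.
Qed.

Lemma chp_t (t : R) (n : nat) : t != 0 ->
  chp n (t + t^-1) = (t ^+ n + t ^- n, t ^+ n.+1 + t ^- n.+1).
Proof.
move=> t0; elim: n => [|n IH] /=.
  by rewrite expr0 invr1 expr1; congr (_, _); rewrite (_ : (2 : R) = 1 + 1).
rewrite IH /=; congr (_, _).
have tn : t ^+ n != 0 by rewrite expf_neq0.
rewrite !exprS; field.
by rewrite tn t0.
Qed.

Lemma chp_conj (a b : rat) (n : nat) : exists A0 B0 A1 B1 : rat,
  chp n (ratr a + ratr b * w) = (ratr A0 + ratr B0 * w, ratr A1 + ratr B1 * w) /\
  chp n (ratr a - ratr b * w) = (ratr A0 - ratr B0 * w, ratr A1 - ratr B1 * w).
Proof.
elim: n => [|n [A0 [B0 [A1 [B1 [IH1 IH2]]]]]] /=.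
  exists 2, 0, a, b; rewrite rmorph0 mul0r addr0 subr0 rmorph_nat; split => //.
exists A1, B1, (a * A1 + b * B1 * m%:R - A0), (a * B1 + b * A1 - B0).
rewrite IH1 IH2 /=; split; congr (_, _);
  rewrite !(rmorphD, rmorphB, rmorphM, rmorph_nat) /= -w_sq; ring.
Qed.

Lemma chp2_abs (y : R) (n : nat) : (0 < n)%N -> (chp n y).1 = 2 -> `|y| <= 2.
Proof.
move=> n0 h; rewrite leNgt; apply/negP => hy.
have hd : 0 <= y ^+ 2 - 4.
  have : 4 < y ^+ 2.
    have hy2 : y ^+ 2 = `|y| ^+ 2 by rewrite real_normK // num_real.
    rewrite hy2; nra.
  lra.
set s := Num.sqrt (y ^+ 2 - 4).
have hs : s ^+ 2 = y ^+ 2 - 4 by rewrite sqr_sqrtr.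
set t := (y + s) / 2.
have ht : t * ((y - s) / 2) = 1.
  have -> : t * ((y - s) / 2) = (y ^+ 2 - s ^+ 2) / 4 by rewrite /t; field.
  by rewrite hs; field.
have t0 : t != 0 by apply/eqP => t0; move: ht; rewrite t0 mul0r => /eqP; rewrite eq_sym oner_eq0.
have hti : t^-1 = (y - s) / 2 by apply: (mulfI t0); rewrite mulfV // ht.
have hy' : y = t + t^-1 by rewrite hti /t; field.
move: h; rewrite hy' chp_t //= => h.
have tn : t ^+ n != 0 by rewrite expf_neq0.
have h2 : (t ^+ n - 1) ^+ 2 = 0.
  have -> : (t ^+ n - 1) ^+ 2 = t ^+ n * (t ^+ n + t ^- n - 2) by field.
  by rewrite h subrr mulr0.
have h3 : t ^+ n = 1 by apply/eqP; rewrite -subr_eq0 -sqrf_eq0 h2.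
have h4 : `|t| = 1.
  by apply/eqP; rewrite -(@eqrXn2 _ n) // ?normr_ge0 // expr1n -normrX h3 normr1.
have h5 : t * t = 1 by rewrite -expr2 -real_normK ?num_real // h4 expr1n.
have h6 : t^-1 = t by apply: (mulfI t0); rewrite mulfV // h5.
have : `|y| = 2 by rewrite hy' h6 -mulr2n normrMn h4.
lra.
Qed.


Lemma cos2kpi (k : nat) : cos (2 * k%:R * pi) = 1 :> R.
Proof.
elim: k => [|k IH]; first by rewrite mulr0 mul0r cos0.
have -> : 2 * k.+1%:R * pi = 2 * k%:R * pi + pi *+ 2 :> R by rewrite -natr1 mulr2n; ring.
by rewrite cosD2pi.
Qed.

Lemma cos_lt1 (n k : nat) : (1 <= k <= n.-1)%N -> cos (2 * k%:R * pi / n%:R) < 1 :> R.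
Proof.
move=> /andP [hk1 hk2].
have hn : (0 < n)%N by case: n hk2 => //; rewrite leqn0 => /eqP; lia.
have hn' : (0 : R) < n%:R by rewrite ltr0n.
pose ph : R := k%:R * pi / n%:R.
have -> : 2 * k%:R * pi / n%:R = ph *+ 2 by rewrite /ph mulr2n; ring.
rewrite cos_mulr2n cos2sin2.
have : 0 < sin ph.
  apply: sin_gt0_pi; apply/andP; split.
  + rewrite /ph divr_gt0 // mulr_gt0 ?pi_gt0 // ltr0n; lia.
  + rewrite /ph ltr_pdivrMr // mulrC ltr_pM2l ?pi_gt0 // ltr_nat; lia.
move=> hs; nra.
Qed.

Lemma UK_info x : @UK R m x -> exists K Q : int,
  x = K%:~R + Q%:~R * om /\ `|K%:~R - Q%:~R * al| <= 2 /\ 0 < x /\ x < 2.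
Proof.
case=> hx0 [halg [[a [b hx]] [n [k [hn hk hcop hxc]]]]].
rewrite hx in halg; have [K [Q [ha hb]]] := @algint_form _ _ halg.
exists K, Q.
have hx' : x = K%:~R + Q%:~R * om by rewrite hx ha hb ratr_half ratr_halfQ val_KQ.
split => //; split; last first.
  split => //; rewrite hxc.
  have := @cos_lt1 n k hk; lra.
have hn0 : (n%:R : R) != 0 by rewrite pnatr_eq0; lia.
have hc : (chp n x).1 = 2.
  rewrite hxc chp_cos /=.
  have -> : n%:R * (2 * k%:R * pi / n%:R) = 2 * k%:R * pi :> R by field.
  by rewrite cos2kpi mulr1.
have [A0 [B0 [A1 [B1 [h1 h2]]]]] := chp_conj a b n.
rewrite hx h1 /= in hc.
have := @rep_uniq A0 B0 2 0; rewrite rmorph0 mul0r addr0 rmorph_nat => /(_ hc) [eA eB].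
have hc' : (chp n (ratr a - ratr b * w)).1 = 2.
  by rewrite h2 /= eA eB rmorph0 mul0r subr0 rmorph_nat.
have := @chp2_abs _ n _ hc'.
rewrite ha hb ratr_half ratr_halfQ conj_KQ; apply; lia.
Qed.

Lemma cos_pi3 : 2 * cos (pi / 3) = 1 :> R.
Proof.
have hc : 0 < cos (pi / 3) :> R.
  apply: cos_gt0_pihalf; have hp := @pi_gt0 R; apply/andP; split; lra.
have := chp_cos (pi / 3) 3; set c := 2 * cos (pi / 3) => /= h.
have e : (3%:R * (pi / 3) : R) = pi by field.
have h3 : c * (c * c - 2) - c = -2.
  have := congr1 fst h; rewrite /= e cospi => ->; ring.
have hc' : 0 < c by rewrite /c; lra.
have : (c - 1) ^+ 2 * (c + 2) = 0 by rewrite -[RHS](subrr (-2)) -{1}h3; ring.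
move/eqP; rewrite mulf_eq0 sqrf_eq0 => /orP [/eqP|/eqP]; lra.
Qed.

Lemma cos_pi5 : 2 * cos (pi / 5) = (1 + Num.sqrt 5) / 2 :> R.
Proof.
have hc : 0 < cos (pi / 5) :> R.
  apply: cos_gt0_pihalf; have hp := @pi_gt0 R; apply/andP; split; lra.
have := chp_cos (pi / 5) 5; set c := 2 * cos (pi / 5) => /= h.
have e : (5%:R * (pi / 5) : R) = pi by field.
have h5 := congr1 fst h; rewrite /= e cospi in h5.
have hc' : 0 < c by rewrite /c; lra.
set r := Num.sqrt (5 : R).
have hr : r ^+ 2 = 5 by rewrite sqr_sqrtr // ler0n.
have hr0 : 0 <= r := sqrtr_ge0 _.
have : (c + 2) * ((c - (1 + r) / 2) * (c - (1 - r) / 2)) ^+ 2 = 0.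
  have -> : (c + 2) * ((c - (1 + r) / 2) * (c - (1 - r) / 2)) ^+ 2 = (c + 2) * (c * c - c - 1 + (5 - r ^+ 2) / 4) ^+ 2 by field.
  rewrite hr subrr mul0r addr0.
  have -> : 0 = 2 * (- 1) + 2 :> R by ring.
  rewrite -h5; ring.
move/eqP; rewrite mulf_eq0 sqrf_eq0 mulf_eq0 => /orP [/eqP|/orP [/eqP|/eqP]]; try lra.
move=> h0; nra.
Qed.

Lemma cos_2pi5 : 2 * cos (2 * pi / 5) = (-1 + Num.sqrt 5) / 2 :> R.
Proof.
have := chp_cos (pi / 5) 2 => /= h.
have := congr1 fst h; rewrite /= cos_pi5 => h2.
set r := Num.sqrt (5 : R) in h2 *.
have hr : r ^+ 2 = 5 by rewrite sqr_sqrtr // ler0n.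
have -> : 2 * pi / 5 = 2%:R * (pi / 5) :> R by field.
rewrite -h2.
have -> : (1 + r) / 2 * ((1 + r) / 2) - 2 = (r ^+ 2 - 5) / 4 + (-1 + r) / 2 by field.
by rewrite hr subrr mul0r add0r.
Qed.

Lemma UK_one : @UK R m 1.
Proof.
split; first exact: ltr01.
split; first by have := algint_KQ 1 0; rewrite mul0r addr0.
split; first by exists 1, 0; rewrite rmorph1 rmorph0 mul0r addr0.
exists 6%N, 1%N; split => //.
have -> : 2 * 1%:R * pi / 6%:R = pi / 3 :> R by field.
by rewrite cos_pi3.
Qed.

Lemma UK_w3 : 3 < w -> @UK R m = [set 1].
Proof.
move=> hw3; apply/seteqP; split => x /=; last by move->; exact: UK_one.
move=> /UK_info [K [Q [hx [hc [hx0 hx2]]]]].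
move: hc; rewrite ler_norml => /andP [c1 c2].
have [hQ|[hQ|hQ]] : 0 < Q \/ Q < 0 \/ Q = 0 by lia.
- exfalso.
  have hQ1 : 1 <= Q%:~R :> R by rewrite ler1z.
  have hQ2 : Q%:~R < 2 :> R.
    have : Q%:~R * w < 4 :> R.
      have -> : Q%:~R * w = x - (K%:~R - Q%:~R * al) :> R by rewrite hx; field.
      lra.
    nra.
  have hQe : Q = 1.
    have : Q < 2 by rewrite -(ltr_int R); lra.
    lia.
  subst Q.
  have k1 : K%:~R < 0 :> R by move: hx2; rewrite hx; lra.
  have k2 : -1 < K%:~R :> R by lra.
  rewrite ltrz0 in k1.
  have : -1 < K by rewrite -(ltr_int R); lra.
  lia.
- exfalso.
  have hQ1 : Q%:~R <= -1 :> R by rewrite (ler_int R Q (-1)); lia.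
  have : Q%:~R * w = x - (K%:~R - Q%:~R * al) :> R by rewrite hx; field.
  nra.
- subst Q; move: hx hx0 hx2; rewrite mul0r addr0 => -> h1 h2.
  have a1 : 0 < K by rewrite -(ltr_int R).
  have a2 : K < 2 by rewrite -(ltr_int R).
  have -> : K = 1 by lia.
  by [].
Qed.

Lemma UK_5 : m = 5%N -> @UK R m = [set (-1 + w) / 2; 1; (1 + w) / 2].
Proof.
move=> hm.
have hw := w_gt2; have hw0 := w_ge0; have hw2 := w_sq.
have h5r : (m%:R : R) = 5 by rewrite hm.
have hw3 : w < 3 by rewrite h5r in hw2; nra.
have hs5 : w = Num.sqrt 5 by rewrite /sqm hm.
apply/seteqP; split => x /=.
- move=> /UK_info [K [Q [hx [hc [hx0 hx2]]]]].
  move: hc; rewrite ler_norml => /andP [c1 c2].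
  have [hQ|[hQ|hQ]] : 0 < Q \/ Q < 0 \/ Q = 0 by lia.
  + have hQ1 : 1 <= Q%:~R :> R by rewrite ler1z.
    have hQ2 : Q%:~R < 2 :> R.
      have : Q%:~R * w < 4 :> R.
        have -> : Q%:~R * w = x - (K%:~R - Q%:~R * al) :> R by rewrite hx; field.
        lra.
      nra.
    have hQe : Q = 1.
      have : Q < 2 by rewrite -(ltr_int R); lra.
      lia.
    subst Q.
    have k1 : K%:~R < 1 :> R by move: hx2; rewrite hx; lra.
    have k2 : -2 < K%:~R :> R by lra.
    have k1' : K < 1 by rewrite -(ltr_int R).
    have k2' : -2 < K by rewrite -(ltr_int R).
    have [hK|hK] : K = -1 \/ K = 0 by lia.
    * by left; left; rewrite hx hK; field.
    * by right; rewrite hx hK; field.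
  + exfalso.
    have hQ1 : Q%:~R <= -1 :> R by rewrite (ler_int R Q (-1)); lia.
    have : Q%:~R * w = x - (K%:~R - Q%:~R * al) :> R by rewrite hx; field.
    nra.
  + subst Q; move: hx hx0 hx2; rewrite mul0r addr0 => -> h1 h2.
    have a1 : 0 < K by rewrite -(ltr_int R).
    have a2 : K < 2 by rewrite -(ltr_int R).
    have -> : K = 1 by lia.
    by left; right.
- case=> [[->|->]|->]; last 2 first.
  + exact: UK_one.
  + split; first lra.
    split; first by have := algint_KQ 0 1; rewrite mul1r add0r.
    split; first by exists (1/2), (1/2); rewrite fmorph_div /= rmorph1 rmorph_nat; field.
    exists 10%N, 1%N; split => //.
    have -> : 2 * 1%:R * pi / 10%:R = pi / 5 :> R by field.
    by rewrite cos_pi5 hs5.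
  + split; first lra.
    split; first by have := algint_KQ (-1) 1; rewrite mul1r rmorphN /= rmorph1 => h; congr alg_int: h; field.
    split; first by exists (-1/2), (1/2); rewrite fmorph_div /= rmorphN /= rmorph1 rmorph_nat; field.
    exists 5%N, 1%N; split => //.
    have -> : 2 * 1%:R * pi / 5%:R = 2 * pi / 5 :> R by field.
    by rewrite cos_2pi5 hs5.
Qed.

Lemma main_sec : let s : int := Num.floor (@sqm R m) in
  [/\ (2 < s -> ~~ odd `|s|%N ->
        let x := (-3 + s%:~R + @sqm R m) / 2 in
        @UK R m = [set 1] /\ @FK R m = [set 1; x; 1 + x] /\ is_min (@TK R m) x),
      (m = 5%N ->
        @UK R m = [set (-1 + @sqm R m) / 2; 1; (1 + @sqm R m) / 2] /\
        @FK R m = @UK R m /\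
        (-1 + @sqm R m) / 2 = 2 * cos (2 * pi / 5) /\
        (1 + @sqm R m) / 2 = 2 * cos (2 * pi / 10)) &
      (odd `|s|%N ->
        let x := (-2 + s%:~R + @sqm R m) / 2 in
        @UK R m = [set 1] /\ @FK R m = [set 1; x; 1 + x] /\ is_min (@TK R m) x)].
Proof.
move=> s.
have hw := w_gt2.
have /andP [hs1 hs2] := floor_itv w; rewrite -/s rmorphD /= in hs1 hs2.
have hs1' : s%:~R < w.
  rewrite lt_neqAle hs1 andbT; apply/negP => /eqP h.
  by have := w_irr (s%:~R); rewrite ratr_int h eqxx.
have s0 : 0 <= s by rewrite -(ler_int R); lra.
have hsa : s = `|s|%N :> int by rewrite gez0_abs.
have hodd := odd_double_half `|s|%N.
split.
- move=> hs3 hev x.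
  rewrite (negbTE hev) add0n in hodd.
  set j : int := (`|s|%N./2)%:Z.
  have hj : s = 2 * j by rewrite hsa -hodd /j -muln2 PoszM mulrC.
  have hf : (j - 1)%:~R < al < (j - 1)%:~R + 1.
    rewrite hj rmorphM /= in hs1' hs2.
    rewrite rmorphB /=; apply/andP; split; lra.
  have hw3 : 3 < w.
    have : (3 : int) <= s by lia.
    rewrite -(ler_int R) => h; lra.
  have ex : x = al + (j - 1)%:~R by rewrite /x hj rmorphB rmorphM /=; field.
  rewrite ex; split; first exact: UK_w3.
  split; first exact: FK_eq.
  exact: TK_min.
- move=> hm.
  have hw2 := w_sq.
  have h5r : (m%:R : R) = 5 by rewrite hm.
  have hw3 : w < 3 by rewrite h5r in hw2; nra.
  have hs5 : w = Num.sqrt 5 by rewrite /sqm hm.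
  have hf : (0 : int)%:~R < al < (0 : int)%:~R + 1 by apply/andP; split; lra.
  have hU := UK_5 hm.
  split => //.
  split.
    rewrite hU (@FK_eq 0 hf); apply/seteqP; split => y /=.
    + have -> : al + (0 : int)%:~R = (-1 + w) / 2 by field.
      have -> : 1 + (-1 + w) / 2 = (1 + w) / 2 by field.
      tauto.
    + have -> : al + (0 : int)%:~R = (-1 + w) / 2 by field.
      have -> : 1 + (-1 + w) / 2 = (1 + w) / 2 by field.
      tauto.
  split; first by rewrite cos_2pi5 hs5.
  have -> : 2 * pi / 10 = pi / 5 :> R by field.
  by rewrite cos_pi5 hs5.
- move=> hodd1 x.
  rewrite hodd1 in hodd.
  set j : int := (`|s|%N./2)%:Z.
  have hj : s = 2 * j + 1 by rewrite hsa -hodd /j -muln2 PoszD PoszM mulrC addrC.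
  have hf : j%:~R < al < j%:~R + 1.
    rewrite hj rmorphD rmorphM /= in hs1' hs2.
    apply/andP; split; lra.
  have hw3 : 3 < w.
    have : (1 : int) < s by rewrite -(ltr_int R); lra.
    move=> h1; have : (3 : int) <= s. move: hj h1; clearbody j; lia.
    rewrite -(ler_int R) => h; lra.
  have ex : x = al + j%:~R by rewrite /x hj rmorphD rmorphM /=; field.
  rewrite ex; split; first exact: UK_w3.
  split; first exact: FK_eq.
  exact: TK_min.
Qed.
End P.

Theorem proposition2p2 (R : realType) (m : nat) :
  (5 <= m)%N -> squarefree_nat m -> (m %% 4 = 1)%N ->
  let s : int := Num.floor (@sqm R m) in
  [/\ (2 < s -> ~~ odd `|s|%N ->
        let x := (-3 + s%:~R + @sqm R m) / 2 in
        @UK R m = [set 1] /\ @FK R m = [set 1; x; 1 + x] /\ is_min (@TK R m) x),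
      (m = 5%N ->
        @UK R m = [set (-1 + @sqm R m) / 2; 1; (1 + @sqm R m) / 2] /\
        @FK R m = @UK R m /\
        (-1 + @sqm R m) / 2 = 2 * cos (2 * pi / 5) /\
        (1 + @sqm R m) / 2 = 2 * cos (2 * pi / 10)) &
      (odd `|s|%N ->
        let x := (-2 + s%:~R + @sqm R m) / 2 in
        @UK R m = [set 1] /\ @FK R m = [set 1; x; 1 + x] /\ is_min (@TK R m) x)].
Proof.
move=> m5 msq m4; exact: (@main_sec R m m5 msq m4).
Qed.
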